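(* Let $n \ge 1$ and $t$ be integers with $1 \le t < \frac{n+1}{2}$. Then the cross-blockchain transaction task $(\mathcal{I}, \mathcal{O}, \Delta)$ on $n+1$ blockchains, defined in the context, has no $t$-resilient protocol in the asynchronous message-passing model with crash failures. That is, no such protocol can guarantee that all local transactions end either all committed or all aborted, in accordance with the carrier map $\Delta$.
   Context: Setting. There are $n+1$ distinct blockchains $C_0,\dots,C_n$. An $(n+1)$-party cross-blockchain transaction touches exactly one block $v_i$ on each blockchain $C_i$. Input complex $\mathcal{I}$. The vertices are the $3(n+1)$ pairs $(v_i, a)$ with $0 \le i \le n$ and $a \in \{0,1,\bot\}$. Here $0$ means the local transaction is not committed, $1$ means it is committed, and $\bot$ means the block's branch was suspended by a fork. A nonempty set of vertices is a simplex if and only if its vertices involve pairwise distinct blocks. Output complex $\mathcal{O}$. The vertices are the pairs $(v_i, b)$ with $b \in \{0,1\}$, where $1$ means committed and $0$ means aborted. A nonempty set of vertices is a simplex if and only if its vertices involve pairwise distinct blocks and all carry the same value $b$. Carrier map $\Delta$. For a simplex $\sigma$ of $\mathcal{I}$ with block set $B(\sigma)$: - $\Delta(\sigma)$ is the simplex $\{(v,1): v \in B(\sigma)\}$ with its faces, if all input values in $\sigma$ are $1$; - it is $\{(v,0): v\in B(\sigma)\}$ with its faces, if some input value in $\sigma$ is $\bot$; - otherwise it is the subcomplex of $\mathcal{O}$ consisting of all simplices whose blocks lie in $B(\sigma)$, i.e. both the all-$0$ and the all-$1$ simplices on $B(\sigma)$ and their faces. Computational model. There are $n+1$ processes (process $i$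 corresponds to blockchain $C_i$) communicating by asynchronous message passing, with at most $t$ of them failing by crashing. Process $i$ starts with input vertex $(v_i,a_i)$ of $\mathcal{I}$. A $t$-resilient protocol solves the task if, in every execution with at most $t$ crashes, each non-crashed process $i$ eventually decides an output vertex $(v_i,b_i)$ of $\mathcal{O}$, and the set of decided vertices is a simplex of $\Delta(\sigma)$, where $\sigma$ is the simplex of inputs of the participating processes. *)

(* Defs.v *)
From Stdlib Require List.
From mathcomp Require Import all_boot.

Set Implicit Arguments.
Unset Strict Implicit.
Unset Printing Implicit Defensive.

(* Input values: [Some false] = 0 (not committed), [Some true] = 1 (committed),
   [None] = bot (branch suspended by a fork). *)
Definition inval := option bool.
Definition in0 : inval := Some false.
Definition in1 : inval := Some true.
Definition inbot : inval := None.

(* The complexes and the carrier map.  Process / blockchain i <-> block v_i,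
   so a vertex (v_i, a) is represented by the pair (i, a).             *)

Definition blocksI N (s : {set 'I_N * inval}) : {set 'I_N} := [set x.1 | x in s].
Definition blocksO N (s : {set 'I_N * bool}) : {set 'I_N} := [set x.1 | x in s].

Definition input_simplex N (s : {set 'I_N * inval}) : bool :=
  (s != set0) && [forall x in s, forall y in s, (x.1 == y.1) ==> (x == y)].

Definition output_simplex N (s : {set 'I_N * bool}) : bool :=
  [&& s != set0,
      [forall x in s, forall y in s, (x.1 == y.1) ==> (x == y)] &
      [forall x in s, forall y in s, x.2 == y.2]].

Definition Delta N (sigma : {set 'I_N * inval}) (tau : {set 'I_N * bool}) : bool :=
  [&& output_simplex tau,
      blocksO tau \subset blocksI sigma &
      if [forall x in sigma, x.2 == in1] then [forall y in tau, y.2 == true]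
      else if [exists x in sigma, x.2 == inbot] then [forall y in tau, y.2 == false]
      else true].

Record protocol (N : nat) : Type := Protocol {
  pstate : Type;
  pmsg : Type;
  pinit : 'I_N -> inval -> pstate;
  (* a step of process i: from its state and the received message
     (None = no message delivered), new state and messages sent (dest, msg) *)
  pstep : 'I_N -> pstate -> option pmsg -> pstate * seq ('I_N * pmsg);
  pdecide : pstate -> option bool }.

(* global configuration: local states and the messages in transit,
   each in-transit message tagged with a unique identifier *)
Record config (N : nat) (S M : Type) := Config {
  cst : 'I_N -> S;
  cnet : seq ((nat * nat) * 'I_N * M) }.

Definition tag_out N M (k : nat) (out : seq ('I_N * M)) :
  seq ((nat * nat) * 'I_N * M) :=
  [seq ((k, jx.1), jx.2.1, jx.2.2) | jx <- zip (iota 0 (size out)) out].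

Definition upd N S (f : 'I_N -> S) (p : 'I_N) (s : S) : 'I_N -> S :=
  fun q => if q == p then s else f q.

Inductive step N (P : protocol N) (k : nat) :
  config N (pstate P) (pmsg P) -> 'I_N -> config N (pstate P) (pmsg P) -> Prop :=
| StepNull (c : config N (pstate P) (pmsg P)) (p : 'I_N) :
    step k c p
      (Config (upd (cst c) p (@pstep N P p (cst c p) None).1)
              (cnet c ++ tag_out k (@pstep N P p (cst c p) None).2))
| StepRecv (c : config N (pstate P) (pmsg P)) (p : 'I_N) (id : nat * nat) (m : pmsg P) :
    List.In (id, p, m) (cnet c) ->
    step k c p
      (Config (upd (cst c) p (@pstep N P p (cst c p) (Some m)).1)
              ([seq e <- cnet c | e.1.1 != id] ++ tag_out k (@pstep N P p (cst c p) (Some m)).2)).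

Definition run N (P : protocol N) (a : 'I_N -> inval)
  (c : nat -> config N (pstate P) (pmsg P)) (who : nat -> 'I_N) : Prop :=
  c 0 = Config (fun i => @pinit N P i (a i)) [::] /\
  forall k, @step N P k (c k) (who k) (c k.+1).

(* a correct (non-crashed) process takes infinitely many steps *)
Definition correct N (who : nat -> 'I_N) (p : 'I_N) : Prop :=
  forall k, exists2 k', k <= k' & who k' = p.

Definition participates N (who : nat -> 'I_N) (p : 'I_N) : Prop :=
  exists k, who k = p.

Definition admissible N (P : protocol N) (t : nat)
  (c : nat -> config N (pstate P) (pmsg P)) (who : nat -> 'I_N) : Prop :=
  (exists F : {set 'I_N}, #|F| <= t /\ forall p, p \notin F -> correct who p) /\
  (forall k id p m, List.In (id, p, m) (cnet (c k)) -> correct who p ->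
     exists2 k', k <= k' & ~ List.In (id, p, m) (cnet (c k'))).

Definition decides N (P : protocol N)
  (c : nat -> config N (pstate P) (pmsg P)) (who : nat -> 'I_N) (p : 'I_N) (b : bool) : Prop :=
  exists k, who k = p /\ @pdecide N P (cst (c k.+1) p) = Some b.

Definition solves_xchain N (t : nat) (P : protocol N) : Prop :=
  forall (a : 'I_N -> inval) c who, @run N P a c who -> @admissible N P t c who ->
    (forall p, correct who p -> exists b, @decides N P c who p b) /\
    (forall (Part : {set 'I_N}) (D : {set 'I_N * bool}),
       (forall p, p \in Part <-> participates who p) ->
       (forall x, x \in D <-> @decides N P c who x.1 x.2) ->
       D != set0 ->
       Delta [set (p, a p) | p in Part] D).

(* Main.v *)
Require Import Defs.
From mathcomp Require Import all_boot.
From Stdlib Require Import ClassicalDescription.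
From mathcomp Require Import zify.

Set Implicit Arguments.
Unset Strict Implicit.
Unset Printing Implicit Defensive.

Definition pb (Q : Prop) : bool := if excluded_middle_informative Q then true else false.
Lemma pbP (Q : Prop) : pb Q <-> Q.
Proof. rewrite /pb; case: excluded_middle_informative => //. Qed.

Lemma In_cat (T : Type) (x : T) (s1 s2 : seq T) :
  List.In x (s1 ++ s2) -> List.In x s1 \/ List.In x s2.
Proof. elim: s1 => [|y s IH] /=; [by right|]. by case=> [->|/IH [h|h]]; auto. Qed.

Lemma In_filter (T : Type) (a : pred T) x (s : seq T) :
  List.In x (filter a s) -> List.In x s /\ a x.
Proof.
elim: s => [|y s IH] //=. case: ifP => ay /=.
  by case=> [<-|/IH [h1 h2]]; auto.
by move/IH => [h1 h2]; auto.
Qed.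

Lemma In_filter2 (T : Type) (a : pred T) x (s : seq T) :
  List.In x s -> a x -> List.In x (filter a s).
Proof.
elim: s => [|y s IH] //=. case=> [<-|h] ax; first by rewrite ax; left.
by case: ifP => _; [right|]; apply: IH.
Qed.

Lemma In_map (T U : Type) (f : T -> U) y (s : seq T) :
  List.In y (map f s) -> exists x, y = f x.
Proof. elim: s => [|x s IH] //=. by case=> [<-|/IH]; eauto. Qed.

Lemma hasIn (T : Type) (a : pred T) (s : seq T) :
  has a s -> exists x, List.In x s /\ a x.
Proof.
elim: s => [|x s IH] //=. case/orP=> [h|/IH [y [h1 h2]]]; eauto.
Qed.

Lemma In_has (T : Type) (a : pred T) x (s : seq T) :
  List.In x s -> a x -> has a s.
Proof.
elim: s => [|y s IH] //=. case=> [<-|h] ax; first by rewrite ax.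
by rewrite IH // orbT.
Qed.

Lemma In_tag_out N M k (out : seq ('I_N * M)) e :
  List.In e (tag_out k out) -> e.1.1.1 = k.
Proof. rewrite /tag_out => H. have [x ->] := In_map H. by []. Qed.

Lemma has_filter_sub (T : Type) (q r : pred T) (s : seq T) :
  (forall x, q x -> r x) -> has q (filter r s) = has q s.
Proof.
move=> H; elim: s => [|x s IH] //=. case: ifP => rx /=; first by rewrite IH.
case qx: (q x); last by rewrite IH.
by move: (H x qx); rewrite rx.
Qed.

Lemma find_filter_sub (T : Type) (q r : pred T) (s : seq T) :
  (forall x, q x -> r x) -> find q (filter r s) <= find q s.
Proof.
move=> H; elim: s => [|x s IH] //=. case: ifP => rx /=.
  by case: ifP.
case qx: (q x); first by move: (H x qx); rewrite rx.
exact: leqW.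
Qed.

Definition nullc n (P : protocol n.+1) (k : nat)
  (c : config n.+1 (pstate P) (pmsg P)) (p : 'I_n.+1) : config n.+1 (pstate P) (pmsg P) :=
  Config (upd (cst c) p (@pstep _ P p (cst c p) None).1)
         (cnet c ++ tag_out k (@pstep _ P p (cst c p) None).2).

Definition recvc n (P : protocol n.+1) (k : nat)
  (c : config n.+1 (pstate P) (pmsg P)) (p : 'I_n.+1) (id : nat * nat) (m : pmsg P)
  : config n.+1 (pstate P) (pmsg P) :=
  Config (upd (cst c) p (@pstep _ P p (cst c p) (Some m)).1)
         ([seq e <- cnet c | e.1.1 != id] ++ tag_out k (@pstep _ P p (cst c p) (Some m)).2).

Definition rr n (k : nat) : 'I_n.+1 := inord ((k./2 %% n).+1).

Definition dnz n (M : Type) (e : (nat * nat) * 'I_n.+1 * M) : bool := e.1.2 != ord0.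

Definition sched n (P : protocol n.+1) (ov : option nat) (k : nat)
  (c : config n.+1 (pstate P) (pmsg P)) : 'I_n.+1 * config n.+1 (pstate P) (pmsg P) :=
  if ov == Some k then (ord0, nullc k c ord0)
  else if odd k then
    match [seq e <- cnet c | dnz e] with
    | e :: _ => (e.1.2, recvc k c e.1.2 e.1.1 e.2)
    | [::] => (rr n k, nullc k c (rr n k))
    end
  else (rr n k, nullc k c (rr n k)).

Fixpoint cfg n (P : protocol n.+1) (a : 'I_n.+1 -> inval) (ov : option nat) (k : nat)
  : config n.+1 (pstate P) (pmsg P) :=
  match k with
  | 0 => Config (fun i => @pinit _ P i (a i)) [::]
  | k'.+1 => (sched ov k' (cfg P a ov k')).2
  end.
Arguments cfg {n} P a ov k.

Definition whos n (P : protocol n.+1) a ov k : 'I_n.+1 := (sched ov k (cfg P a ov k)).1.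
Arguments whos {n} P a ov k.

Lemma run_ok n (P : protocol n.+1) a ov : run a (cfg P a ov) (whos P a ov).
Proof.
split; first by [].
move=> k; rewrite /whos /=; set c := cfg P a ov k.
rewrite /sched; case: ifP => _; first exact: StepNull.
case: ifP => _; last exact: StepNull.
case E: [seq e <- cnet c | dnz e] => [|e s]; first exact: StepNull.
apply: StepRecv.
have H : List.In e [seq e <- cnet c | dnz e] by rewrite E; left.
have [h _] := In_filter H.
by case: e {E H} h => [[id p] m].
Qed.

Lemma tags_lt n (P : protocol n.+1) a ov k e :
  List.In e (cnet (cfg P a ov k)) -> e.1.1.1 < k.
Proof.
elim: k e => [|k IH] e //=.
rewrite /sched; set c := cfg P a ov k.
have Hn : forall p, List.In e (cnet (nullc k c p)) -> e.1.1.1 < k.+1.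
  move=> p H; case: (In_cat H) => [/IH h|h]; first exact: leqW.
  by rewrite (In_tag_out h).
case: ifP => _; first exact: Hn.
case: ifP => _; last exact: Hn.
case: [seq e <- cnet c | dnz e] => [|e' s]; first exact: Hn.
move=> H; case: (In_cat H) => [h|h]; last by rewrite (In_tag_out h).
have [/IH h' _] := In_filter h; exact: leqW.
Qed.

Definition qid n (M : Type) (id : nat * nat) (e : (nat * nat) * 'I_n.+1 * M) : bool :=
  e.1.1 == id.
Definition Hs n (M : Type) id (s : seq ((nat * nat) * 'I_n.+1 * M)) : bool :=
  has (qid id) (filter (@dnz n M) s).
Definition mus n (M : Type) id (s : seq ((nat * nat) * 'I_n.+1 * M)) : nat :=
  find (qid id) (filter (@dnz n M) s).

Lemma notag n (M : Type) id k (out : seq ('I_n.+1 * M)) :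
  id.1 != k -> has (qid id) (filter (@dnz n M) (tag_out k out)) = false.
Proof.
move=> hk; apply/negbTE/negP => H; have [x [h1 h2]] := hasIn H.
have [h3 _] := In_filter h1; have h4 := In_tag_out h3.
move: h2; rewrite /qid => /eqP hx; by rewrite -hx h4 eqxx in hk.
Qed.

Lemma null_same n (P : protocol n.+1) id k c p : id.1 != k ->
  Hs id (cnet c) ->
  Hs id (cnet (@nullc n P k c p)) /\ mus id (cnet (@nullc n P k c p)) = mus id (cnet c).
Proof.
move=> hk H; rewrite /Hs /mus /= filter_cat has_cat find_cat notag // orbF.
by move: H; rewrite /Hs => ->.
Qed.

Lemma step_dec n (P : protocol n.+1) a ov id k : id.1 < k ->
  Hs id (cnet (cfg P a ov k)) ->
  ~~ Hs id (cnet (cfg P a ov k.+1)) \/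
  (Hs id (cnet (cfg P a ov k.+1)) /\
   mus id (cnet (cfg P a ov k.+1)) + (odd k && (ov != Some k)) <= mus id (cnet (cfg P a ov k))).
Proof.
move=> hk H; have hk' : id.1 != k by rewrite neq_ltn hk.
rewrite /=; set c := cfg P a ov k; rewrite /sched.
case: ifP => hov.
  have [h1 h2] := @null_same n P id k c ord0 hk' H. by right; rewrite h1 h2 andbF addn0.
case: ifP => hodd; last first.
  have [h1 h2] := @null_same n P id k c (rr n k) hk' H. by right; rewrite h1 h2 addn0.
move: H; rewrite /Hs /mus.
case E: [seq e <- cnet c | dnz e] => [|e s] //= H.
rewrite filter_cat has_cat find_cat notag // orbF.
have -> : [seq x <- [seq x <- cnet c | x.1.1 != e.1.1] | dnz x] =
          [seq x <- [seq x <- cnet c | dnz x] | x.1.1 != e.1.1].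
  by rewrite -!filter_predI; apply: eq_filter => x /=; rewrite andbC.
rewrite E /= eqxx /=.
case qe: (qid id e).
  left; apply/negP => /hasIn [x [h1 h2]]; have [_ h3] := In_filter h1.
  have he : e.1.1 = id by apply/eqP.
  have hx : x.1.1 = id by apply/eqP.
  by rewrite hx he eqxx in h3.
have hs : has (qid id) s by move: H; rewrite qe.
have sub : forall x : nat * nat * 'I_n.+1 * pmsg P, qid id x -> x.1.1 != e.1.1.
  move=> x hx; have hx' : x.1.1 = id by apply/eqP.
  rewrite hx' eq_sym; apply/negP => /eqP he.
  by rewrite /qid he eqxx in qe.
rewrite has_filter_sub // hs; right; split=> //.
by rewrite addn1 ltnS; exact: find_filter_sub.
Qed.

Lemma multi n (P : protocol n.+1) a ov id k j : id.1 < k ->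
  Hs id (cnet (cfg P a ov k)) ->
  (exists2 i, k <= i & ~~ Hs id (cnet (cfg P a ov i))) \/
  (Hs id (cnet (cfg P a ov (k + j))) /\
   mus id (cnet (cfg P a ov (k + j))) <= mus id (cnet (cfg P a ov k))).
Proof.
move=> hk H; elim: j => [|j IH]; first by right; rewrite addn0.
case: IH => [l|[h m]]; first by left.
have hk' : id.1 < k + j by apply: (leq_trans hk); exact: leq_addr.
case: (step_dec hk' h) => [h'|[h' m']].
  by left; exists (k + j).+1 => //; rewrite -addnS leq_addr.
right; rewrite addnS; split=> //.
apply: leq_trans m; apply: leq_trans m'; exact: leq_addr.
Qed.

Lemma exists_o (ov : option nat) k : exists o, [/\ k <= o, odd o & ov != Some o].
Proof.
set o1 := k + ~~ odd k.
have ho1 : odd o1 by rewrite /o1 oddD; case: (odd k).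
have hk1 : k <= o1 by rewrite /o1 leq_addr.
case hov: (ov == Some o1).
  exists (o1 + 2); split.
  - by apply: leq_trans hk1 _; rewrite leq_addr.
  - by rewrite oddD ho1.
  - rewrite (eqP hov); apply/eqP => -[] /eqP.
    by rewrite -{1}(addn0 o1) eqn_add2l.
by exists o1; split=> //; rewrite hov.
Qed.

Lemma fair_H n (P : protocol n.+1) a ov id k : id.1 < k ->
  Hs id (cnet (cfg P a ov k)) ->
  exists2 k', k <= k' & ~~ Hs id (cnet (cfg P a ov k')).
Proof.
move=> hk H.
move: {2}(mus id (cnet (cfg P a ov k))) (leqnn (mus id (cnet (cfg P a ov k)))) => m.
elim: m k hk H => [|m IH] k hk H hm;
  (have [o [hko hodd hov]] := exists_o ov k;
   have hlt : id.1 < o by apply: leq_trans hko);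
  (case: (@multi n P a ov id k (o - k) hk H) => [//|]; rewrite subnKC // => -[ho mo];
   case: (step_dec hlt ho) => [h'|[h' m']];
   [by exists o.+1 => //; apply: leq_trans hko _; exact: leqnSn|];
   rewrite hodd hov addn1 in m').
- by have := leq_trans m' (leq_trans mo hm).
- have [k' hk' hk''] := IH o.+1 (leq_trans hlt (leqnSn _)) h'
    (leq_trans m' (leq_trans mo hm) : _ <= m.+1).
  by exists k' => //; apply: leq_trans hk'; apply: leq_trans hko _; exact: leqnSn.
Qed.

Lemma fair n (P : protocol n.+1) a ov k id (p : 'I_n.+1) (m : pmsg P) : p != ord0 ->
  List.In (id, p, m) (cnet (cfg P a ov k)) ->
  exists2 k', k <= k' & ~ List.In (id, p, m) (cnet (cfg P a ov k')).
Proof.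
move=> hp H; have hk := tags_lt H.
have hH : Hs id (cnet (cfg P a ov k)).
  apply: (In_has (x := (id, p, m))); last by rewrite /qid /=.
  by apply: In_filter2.
have [k' h1 h2] := fair_H hk hH.
exists k' => // H'; move/negP: h2; apply.
apply: (In_has (x := (id, p, m))); last by rewrite /qid /=.
by apply: In_filter2.
Qed.

Lemma rr_nz n k : 0 < n -> rr n k != ord0.
Proof.
move=> hn; rewrite /rr; apply/eqP => /(congr1 val) /=.
by rewrite inordK // ltnS ltn_pmod.
Qed.

Lemma who0 n (P : protocol n.+1) a ov k : 0 < n ->
  whos P a ov k = ord0 -> ov = Some k.
Proof.
move=> hn; rewrite /whos /sched; case: ifP => [/eqP //|_].
have := rr_nz k hn.
case: ifP => _; last by move/eqP.
case E: [seq e <- cnet (cfg P a ov k) | dnz e] => [|e s] /=; first by move/eqP.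
move=> _ he.
have H : List.In e [seq e <- cnet (cfg P a ov k) | dnz e] by rewrite E; left.
have [_ h] := In_filter H. by move: h; rewrite /dnz he eqxx.
Qed.

Lemma who_even n (P : protocol n.+1) a ov k : ~~ odd k -> ov != Some k ->
  whos P a ov k = rr n k.
Proof. by move=> ho hov; rewrite /whos /sched (negbTE hov) (negbTE ho). Qed.

Lemma corr n (P : protocol n.+1) a ov (p : 'I_n.+1) : 0 < n -> p != ord0 ->
  correct (whos P a ov) p.
Proof.
move=> hn hp k0.
have hp0 : 0 < p by rewrite lt0n; apply: contraNneq hp => h; apply/eqP; apply/val_inj.
have hp' : p.-1 < n by rewrite -ltnS prednK //; exact: ltn_ord.
have key : forall j, ~~ odd (j * n + p.-1).*2 /\ rr n (j * n + p.-1).*2 = p.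
  move=> j; rewrite odd_double; split=> //.
  apply: val_inj; rewrite /rr /= doubleK modnMDl modn_small // prednK // inordK //.
have ge : forall j, k0 <= j -> k0 <= (j * n + p.-1).*2.
  move=> j hj; apply: leq_trans hj _; rewrite -addnn; apply: leq_trans (leq_addr _ _).
  apply: leq_trans (leq_addr _ _); by rewrite leq_pmulr.
case hov: (ov == Some (k0 * n + p.-1).*2).
  exists (k0.+1 * n + p.-1).*2; first exact: ge.
  have [h1 h2] := key k0.+1; rewrite who_even // (eqP hov); apply/eqP => -[] h.
  move: h; rewrite -!muln2 mulSn; lia.
exists (k0 * n + p.-1).*2; first exact: ge.
have [h1 h2] := key k0; by rewrite who_even // hov.
Qed.

Lemma agree n (P : protocol n.+1) a K k : k <= K ->
  cfg P a None k = cfg P a (Some K) k.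
Proof.
elim: k => [|k IH] hk //=.
rewrite -IH; last exact: ltnW.
rewrite /sched. have h2 : (Some K == Some k) = false.
  by apply/negbTE/eqP => -[] e; rewrite e ltnn in hk.
rewrite h2. have h1 : (None == Some k) = false by []. rewrite h1. reflexivity. Qed.



Lemma agree_who n (P : protocol n.+1) a K k : k < K ->
  whos P a None k = whos P a (Some K) k.
Proof.
move=> hk; rewrite /whos -(@agree n P a K k); last exact: ltnW.
rewrite /sched. have h2 : (Some K == Some k) = false.
  by apply/negbTE/eqP => -[] e; rewrite e ltnn in hk.
rewrite h2. have h1 : (None == Some k) = false by []. rewrite h1. reflexivity.
Qed.

Lemma not_corr0 n (P : protocol n.+1) a ov : 0 < n -> ~ correct (whos P a ov) ord0.
Proof.
move=> hn hc.
have [k' h1 h2] := hc (if ov is Some K then K.+1 else 0).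
have := who0 hn h2; case: ov {hc h2} h1 => [K|] // h1 -[] e.
by rewrite e ltnn in h1.
Qed.

Lemma adm n (P : protocol n.+1) a ov t : 0 < n -> 0 < t ->
  admissible t (cfg P a ov) (whos P a ov).
Proof.
move=> hn ht; split.
  exists [set ord0]; split; first by rewrite cards1.
  by move=> p; rewrite in_set1 => hp; apply: corr.
move=> k id p m H hc.
have hp : p != ord0.
  by apply/eqP => e; subst p; exact: (not_corr0 hn hc).
exact: fair hp H.
Qed.

Theorem proposition1 (n t : nat) :
  1 <= n -> 1 <= t -> 2 * t < n + 1 ->
  ~ exists P : protocol n.+1, solves_xchain t P.
Proof.
move=> hn ht _ [P hP].
pose a := fun i : 'I_n.+1 => if i == ord0 then inbot else in1.
pose p1 : 'I_n.+1 := inord 1.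
have hp1 : p1 != ord0.
  apply/eqP => /(congr1 val) /=; rewrite inordK //.
(* execution E1: process 0 never takes a step *)
have [h1c h1d] := hP a _ _ (run_ok P a None) (adm P a None hn ht).
have [b [k1 [hw1 hd1]]] := h1c p1 (corr P a None hn hp1).
pose w1 := whos P a None.
pose c1 := cfg P a None.
have part1 : forall p, participates w1 p -> p != ord0.
  move=> p [k hk]; apply/eqP => e; rewrite e in hk.
  by have := who0 hn hk.
have HPa : forall p, p \in [set p | pb (participates w1 p)] <-> participates w1 p.
  by move=> p; rewrite inE; exact: pbP.
have HD : forall x, x \in [set x | pb (decides c1 w1 x.1 x.2)] <-> decides c1 w1 x.1 x.2.
  by move=> x; rewrite inE; exact: pbP.
have HN : [set x | pb (decides c1 w1 x.1 x.2)] != set0.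
  apply/set0Pn; exists (p1, b); rewrite inE; apply/pbP; exists k1; split; [exact: hw1|exact: hd1].
move: (h1d _ _ HPa HD HN) => /and3P [_ _]; clear HPa HD HN.
have -> : [forall x in [set (p, a p) | p in [set p | pb (participates w1 p)]], x.2 == in1].
  apply/forallP => x; apply/implyP => /imsetP [p hp ->] /=.
  rewrite inE in hp; move/pbP: hp => /part1 hp.
  by rewrite /a (negbTE hp).
move=> /forallP /(_ (p1, b)) /implyP hb.
have eb : b = true.
  apply/eqP; apply: hb; rewrite inE; apply/pbP; exists k1; split; [exact: hw1|exact: hd1].
subst b.
(* execution E2: process 0 takes one step at time k1.+1 *)
pose K := k1.+1.
have [_ h2d] := hP a _ _ (run_ok P a (Some K)) (adm P a (Some K) hn ht).
pose w2 := whos P a (Some K).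
pose c2 := cfg P a (Some K).
have d2 : decides c2 w2 p1 true.
  exists k1; split.
    rewrite /w2 -agree_who; [exact: hw1|exact: ltnSn].
  rewrite /c2 -agree; [exact: hd1|exact: leqnn].
have wK : w2 K = ord0.
  rewrite /w2 /whos /sched eqxx; reflexivity.
have in0 : (ord0, inbot) \in [set (p, a p) | p in [set p | pb (participates w2 p)]].
  apply/imsetP; exists ord0.
    by rewrite inE; apply/pbP; exists K.
  by rewrite /a eqxx.
have HPa : forall p, p \in [set p | pb (participates w2 p)] <-> participates w2 p.
  by move=> p; rewrite inE; exact: pbP.
have HD : forall x, x \in [set x | pb (decides c2 w2 x.1 x.2)] <-> decides c2 w2 x.1 x.2.
  by move=> x; rewrite inE; exact: pbP.
have HN : [set x | pb (decides c2 w2 x.1 x.2)] != set0.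
  by apply/set0Pn; exists (p1, true); rewrite inE; apply/pbP.
move: (h2d _ _ HPa HD HN) => /and3P [_ _]; clear HPa HD HN.
have -> : [forall x in [set (p, a p) | p in [set p | pb (participates w2 p)]], x.2 == in1]
          = false.
  apply/negbTE/forallPn; exists (ord0, inbot).
  by rewrite negb_imply in0.
have -> : [exists x in [set (p, a p) | p in [set p | pb (participates w2 p)]], x.2 == inbot].
  by apply/existsP; exists (ord0, inbot); rewrite in0.
move=> /forallP /(_ (p1, true)) /implyP h.
have : (p1, true) \in [set x | pb (decides c2 w2 x.1 x.2)] by rewrite inE; apply/pbP.
by move/h.
Qed.
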